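(* Let $m\ge1$, $\boldsymbol\gamma=(\gamma_1,\ldots,\gamma_m)\in\mathbb{N}^m$, $\boldsymbol f=(f_1,\ldots,f_{m+1})$ a tuple of arithmetic functions and $\xi:\mathbb{N}^m\to\mathbb{C}$. For every $n_1\in\mathbb{N}$ and all $n_2,\ldots,n_{m+1}\in\mathbb{N}$, \[ S^{\boldsymbol\gamma,\xi}_{\boldsymbol f}(n_1,\ldots,n_{m+1})=\sum_{l_2,\ldots,l_{m+1}=1}^{n_1}a_{n_1}(l_2,\ldots,l_{m+1})\,e(n_1,n_2l_2)\cdots e(n_1,n_{m+1}l_{m+1}) =\sum_{d_2,\ldots,d_{m+1}\mid n_1}\alpha_{n_1}(d_2,\ldots,d_{m+1})\,c(d_2,n_2)\cdots c(d_{m+1},n_{m+1}), \] where \[ a_{n_1}(l_2,\ldots,l_{m+1})=n_1^{-m}\,S^{{}^t\xi^{\boldsymbol\gamma}_{n_1}}_{{}^t\widetilde{\boldsymbol f}}(n_1,l_{m+1},\ldots,l_2),\qquad \alpha_{n_1}(d_2,\ldots,d_{m+1})=n_1^{-m}\,S^{{}^t\xi^{\boldsymbol\gamma}_{n_1}}_{{}^t\widetilde{\boldsymbol f}}\Bigl(n_1,\frac{n_1}{d_{m+1}},\ldots,\frac{n_1}{d_2}\Bigr). \] (These are the unique finite Fourier coefficients of $(n_2,\ldots,n_{m+1})\mapsto S^{\boldsymbol\gamma,\xi}_{\boldsymbol f}(n_1,\ldots,n_{m+1})$.)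
   Context: An arithmetic function is a map $f:\mathbb{N}\to\mathbb{C}$, with $f(x)=0$ for $x\notin\mathbb{N}$. $\delta^x(n):=n^x$. For $\gamma\in\mathbb{N}$, $a_\gamma(n)=1$ if $n$ is a $\gamma$-th power of a positive integer and $0$ otherwise. $e(r,n):=\exp(2\pi\sqrt{-1}\,n/r)$, and $c(k,n):=\sum_{d\mid\gcd(k,n)}\mu(k/d)\,d$ is the Ramanujan sum ($\mu$ the Möbius function). For $\boldsymbol\gamma\in\mathbb{N}^m$, arithmetic functions $g_1,\ldots,g_{m+1}$ and a weight $\eta:\mathbb{N}^m\to\mathbb{C}$, define \[ S^{\boldsymbol\gamma,\eta}_{g_1,\ldots,g_{m+1}}(n_1,\ldots,n_{m+1}):=\sum_{\substack{(d_1,\ldots,d_m)\in\mathbb{N}^m\\ d_j^{\gamma_j}\mid\gcd(n_1,\ldots,n_{j+1})\ (1\le j\le m)}}\eta(d_1^{\gamma_1},\ldots,d_m^{\gamma_m})\, g_1\Bigl(\frac{n_1}{d_1^{\gamma_1}}\Bigr)g_2\Bigl(\frac{d_1^{\gamma_1}}{d_2^{\gamma_2}}\Bigr)\cdots g_m\Bigl(\frac{d_{m-1}^{\gamma_{m-1}}}{d_m^{\gamma_m}}\Bigr)g_{m+1}\bigl(d_m^{\gamma_m}\bigr), \] and write $S^{\eta}_{g_1,\ldots,g_{m+1}}:=S^{(1,\ldots,1),\eta}_{g_1,\ldots,g_{m+1}}$. For $\boldsymbol f=(f_1,\ldots,f_{m+1})$ set ${}^t\widetilde{\boldsymbol f}:=(\delta^0f_{m+1},\delta^1f_m,\ldots,\delta^mf_1)$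 (products of functions taken pointwise), and for $n\in\mathbb{N}$ set \[ {}^t\xi^{\boldsymbol\gamma}_n(d_1,\ldots,d_m):=\Bigl(\prod_{j=1}^m a_{\gamma_j}\Bigl(\frac{n}{d_{m+1-j}}\Bigr)\Bigr)\,\xi\Bigl(\frac{n}{d_m},\ldots,\frac{n}{d_1}\Bigr) \] (only values with $d_j\mid n$ are used). *)

(* Defs.v *)
From HB Require Import structures.
From mathcomp Require Import all_boot all_order all_algebra.
From mathcomp Require Import reals trigo.
From mathcomp Require Import complex.
Set Implicit Arguments. Unset Strict Implicit. Unset Printing Implicit Defensive.
Import Order.TTheory GRing.Theory Num.Theory.
Local Open Scope ring_scope.

Section Defs.
Variable R : realType.
Local Notation C := R[i].

Definition moebius (n : nat) : int :=
  if n == 0%N then 0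
  else if all (fun p => logn p n <= 1)%N (primes n) then (-1) ^+ size (primes n)
  else 0.

Definition ramanujan (k n : nat) : C :=
  \sum_(d <- divisors (gcdn k n)) (moebius (k %/ d))%:~R * d%:R.

Definition ee (r n : nat) : C :=
  (cos (2 * pi * n%:R / r%:R) +i* sin (2 * pi * n%:R / r%:R))%C.

Definition apow (g k : nat) : bool :=
  (0 < k)%N && [exists r : 'I_k.+1, (0 < r)%N && (r ^ g == k)%N].

(* g(a/b) with the convention that g vanishes off the positive integers
   (only used with a, b > 0) *)
Definition fq (g : nat -> C) (a b : nat) : C :=
  if (b %| a)%N then g (a %/ b)%N else 0.

(* S^{gamma,eta}_{g_1..g_{m+1}}(n_1..n_{m+1}); g i = g_{i+1}, n i = n_{i+1}.
   Since d_j >= 1 and d_j^{gamma_j} | n_1 with gamma_j >= 1, d_j <= n_1. *)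
Definition Ssum (m : nat) (gam : 'I_m -> nat) (eta : m.-tuple nat -> C)
    (g : nat -> nat -> C) (n : nat -> nat) : C :=
  \sum_(d : {ffun 'I_m -> 'I_(n 0%N).+1} |
         [forall j : 'I_m, (0 < d j)%N &&
            (d j ^ gam j %| \big[gcdn/0%N]_(0 <= i < j.+2) n i)%N])
    (let P := mktuple (fun j => (nat_of_ord (d j)) ^ gam j)%N in
     eta P * \prod_(i < m.+1) fq (g i) (nth 1%N (n 0%N :: P) i) (nth 1%N (n 0%N :: P) i.+1)).

(* ^t tilde f = (delta^0 f_{m+1}, delta^1 f_m, ..., delta^m f_1) *)
Definition ftil (m : nat) (f : nat -> nat -> C) : nat -> nat -> C :=
  fun i x => (x%:R) ^+ i * f (m - i)%N x.

Definition txi (m : nat) (gam : 'I_m -> nat) (xi : m.-tuple nat -> C) (n : nat)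
    (d : m.-tuple nat) : C :=
  (\prod_(j < m) ((tnth d (rev_ord j) %| n)%N && apow (gam j) (n %/ tnth d (rev_ord j))%N)%:R)
  * xi (mktuple (fun j => (n %/ tnth d (rev_ord j))%N)).

Definition ext (m : nat) (t : 'I_m -> nat) : nat -> nat :=
  fun i => oapp t 0%N (insub i).

(* the argument vector (n1, t_{m}, ..., t_1) where t is 0-indexed: t j = x_{j+2} *)
Definition revargs (m n1 : nat) (t : nat -> nat) : nat -> nat :=
  fun k => if k == 0%N then n1 else t (m - k)%N.

(* a_{n1}(l_2..l_{m+1}) ; l j = l_{j+2} *)
Definition acoef (m : nat) (gam : 'I_m -> nat) (f : nat -> nat -> C)
    (xi : m.-tuple nat -> C) (n1 : nat) (l : 'I_m -> nat) : C :=
  (n1%:R ^- m) * Ssum (fun _ => 1%N) (txi gam xi n1) (ftil m f) (revargs m n1 (ext l)).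

(* alpha_{n1}(d_2..d_{m+1}) ; d j = d_{j+2} *)
Definition alphacoef (m : nat) (gam : 'I_m -> nat) (f : nat -> nat -> C)
    (xi : m.-tuple nat -> C) (n1 : nat) (d : 'I_m -> nat) : C :=
  (n1%:R ^- m) * Ssum (fun _ => 1%N) (txi gam xi n1) (ftil m f)
                      (revargs m n1 (fun k => n1 %/ ext d k)%N).

End Defs.

(* Main.v *)
Require Import Defs.
From HB Require Import structures.
From mathcomp Require Import all_boot all_order all_algebra.
From mathcomp Require Import reals trigo.
From mathcomp Require Import complex.
Import Order.TTheory GRing.Theory Num.Theory.
Local Open Scope ring_scope.

From mathcomp Require Import ring lra zify.
Set Implicit Arguments. Unset Strict Implicit. Unset Printing Implicit Defensive.

Section EE.
Variable R : realType.
Local Notation C := R[i].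

Definition EE (t : R) : C := (cos t +i* sin t)%C.

Lemma EED a b : EE (a + b) = EE a * EE b.
Proof. rewrite /EE cosD sinD; simpc; congr (_ +i* _)%C; ring. Qed.

Lemma EE0 : EE 0 = 1.
Proof. by rewrite /EE cos0 sin0. Qed.

Lemma EEMn a k : EE (a *+ k) = EE a ^+ k.
Proof. elim: k => [|k IH]; first by rewrite mulr0n EE0 expr0.
by rewrite mulrS EED IH exprS. Qed.

Lemma EE2pi : EE (pi *+ 2) = 1.
Proof. by rewrite /EE cos2pi sin2pi. Qed.

Lemma eeE r x : ee R r x = EE (2 * pi * x%:R / r%:R).
Proof. by []. Qed.

Lemma eeD r x y : ee R r (x + y) = ee R r x * ee R r y.
Proof. by rewrite !eeE -EED natrD mulrDr mulrDl. Qed.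

Lemma eeM r x k : ee R r (x * k) = ee R r x ^+ k.
Proof. rewrite !eeE -EEMn; congr EE; rewrite natrM -mulr_natr; ring. Qed.

Lemma eerr r : (0 < r)%N -> ee R r r = 1.
Proof. move=> r0; rewrite eeE mulfK ?pnatr_eq0 -?lt0n //.
by rewrite -EE2pi mulr_natl. Qed.

Lemma EE_neq1 t : 0 < t < pi *+ 2 -> EE t != 1.
Proof.
move=> /andP[t0 t2]; apply/eqP => /(congr1 (@complex.Re R)) /= c1.
have h : cos t = 1 - 2 * sin (t / 2) ^+ 2.
  have ht : t = t/2 + t/2 by field.
  rewrite {1}ht cosD; have := cos2Dsin2 (t/2). move=> e. rewrite -[X in X - 2 * _]e. ring.
have : 0 < sin (t / 2) by apply: sin_gt0_pi; rewrite divr_gt0 //= ltr_pdivrMr // mulr_natr.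
move=> s0; rewrite c1 in h; nra.
Qed.

Lemma ee_mod D N : (0 < D)%N -> ee R D N = ee R D (N %% D).
Proof.
move=> D0; rewrite {1}(divn_eq N D) eeD mulnC eeM eerr // expr1n mul1r //.
Qed.

Lemma ee_neq1 D r : (0 < r < D)%N -> ee R D r != 1.
Proof.
move=> /andP[r0 rD]; rewrite eeE; apply: EE_neq1.
have D0 : (0 < D%:R :> R) by rewrite ltr0n (ltn_trans r0 rD).
have hx : 0 < r%:R / D%:R :> R by rewrite divr_gt0 // ltr0n.
have hx1 : r%:R / D%:R < 1 :> R by rewrite ltr_pdivrMr // mul1r ltr_nat.
have p0 := pi_gt0 R.
rewrite -mulrA mulr2n; apply/andP; split; nra.
Qed.

Lemma ee_sum D N : (0 < D)%N ->
  \sum_(k < D) ee R D (N * k.+1) = (D * (D %| N))%:R.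
Proof.
move=> D0.
have -> : \sum_(k < D) ee R D (N * k.+1) = ee R D N * \sum_(k < D) (ee R D N) ^+ k.
  by rewrite mulr_sumr; apply: eq_bigr => k _; rewrite eeM exprS.
have zD : ee R D N ^+ D = 1 by rewrite -eeM mulnC eeM eerr // expr1n.
case: (boolP (D %| N)%N) => [/dvdnP[c ->]|nd].
  rewrite mulnC eeM eerr // expr1n mul1r muln1.
  by under eq_bigr do rewrite expr1n; rewrite sumr_const card_ord.
rewrite muln0; apply/eqP; rewrite mulf_eq0; apply/orP; right.
have z1 : ee R D N - 1 != 0.
  rewrite subr_eq0 ee_mod //; apply: ee_neq1.
  by rewrite ltn_pmod // andbT lt0n; exact: nd.
by have := subrX1 (ee R D N) D; rewrite zD subrr => /esym/eqP; rewrite mulf_eq0 (negbTE z1).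
Qed.

Lemma sum_dvd_shift (F : nat -> C) e D : (0 < e)%N ->
  \sum_(x < e * D) ((e %| x.+1)%N)%:R * F x.+1 = \sum_(k < D) F (e * k.+1)%N.
Proof.
case: e => // e' _; elim: D => [|D IH]; first by rewrite muln0 !big_ord0.
rewrite mulnS addnC big_split_ord /= IH [in RHS]big_ord_recr /=; congr (_ + _).
rewrite big_ord_recr /= big1 ?add0r.
  have -> : (e'.+1 * D + e').+1 = e'.+1 * D.+1 by lia.
  by rewrite dvdn_mulr // mul1r.
move=> i _; rewrite -addnS dvdn_addr ?dvdn_mulr //.
case: (boolP (e'.+1 %| i.+1)%N) => [/dvdn_leq|]; last by rewrite mul0r.
by move=> /(_ isT); rewrite ltnS leqNgt ltn_ord.
Qed.

Lemma ee_scale e D x : (0 < e)%N -> ee R (e * D) (e * x) = ee R D x.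
Proof.
move=> e0; rewrite !eeE !natrM; congr EE.
have : (e%:R : R) != 0 by rewrite pnatr_eq0 -lt0n.
case: (boolP (D%:R == 0 :> R)) => [/eqP ->|D0] e0'.
  by rewrite mulr0 !invr0 !mulr0.
by field; apply/andP.
Qed.

Lemma I1 n1 e N : (0 < e)%N -> (e %| n1)%N -> (0 < n1)%N ->
  \sum_(x < n1) ((e %| x.+1)%N)%:R * ee R n1 (N * x.+1) = ((n1 %/ e) * ((n1 %/ e) %| N))%:R.
Proof.
move=> e0 /dvdnP[D ->] n0; rewrite mulnK // [(D * e)%N]mulnC.
have D0 : (0 < D)%N by move: n0; rewrite muln_gt0 => /andP[].
rewrite (sum_dvd_shift (fun y => ee R (e * D) (N * y))) //.
rewrite -ee_sum //; apply: eq_bigr => k _.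
by rewrite mulnCA ee_scale.
Qed.
End EE.


Lemma moebius1 : moebius 1 = 1.
Proof. by []. Qed.

Lemma primes_pM p d : prime p -> (0 < d)%N -> ~~ (p %| d)%N ->
  perm_eq (primes (p * d)) (p :: primes d).
Proof.
move=> pp d0 npd; apply: uniq_perm; first exact: primes_uniq.
  by rewrite /= primes_uniq andbT mem_primes pp d0 /=.
by move=> q; rewrite (primesM _ (prime_gt0 pp) d0) (primes_prime pp) !inE.
Qed.

Lemma moebius_pM p d : prime p -> (0 < d)%N -> ~~ (p %| d)%N ->
  moebius (p * d) = - moebius d.
Proof.
move=> pp d0 npd; rewrite /moebius muln_eq0 !eqn0Ngt prime_gt0 // d0 /=.
have P := primes_pM pp d0 npd.
rewrite (perm_all _ P) (perm_size P) /= (lognM p (prime_gt0 pp) d0) logn_prime // eqxx.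
have -> : logn p d = 0%N by apply/eqP; rewrite -leqn0 leqNgt logn_gt0 mem_primes pp d0 (negbTE npd) andbF.
have -> : all (fun q => logn q (p * d) <= 1)%N (primes d) = all (fun q => logn q d <= 1)%N (primes d).
  apply: eq_in_all => q; rewrite mem_primes => /and3P[qp _ qd].
  rewrite (lognM q (prime_gt0 pp) d0) logn_prime //.
  by have -> : (q == p) = false by apply/eqP => qp'; move: npd; rewrite -qp' qd.
by case: all; rewrite ?oppr0 // exprS mulN1r.
Qed.

Lemma moebius_pM0 p d : prime p -> (0 < d)%N -> (p %| d)%N -> moebius (p * d) = 0.
Proof.
move=> pp d0 pd; rewrite /moebius muln_eq0 !eqn0Ngt prime_gt0 // d0 /=.
case: allP => // H; have := H p; rewrite mem_primes pp muln_gt0 prime_gt0 // d0 dvdn_mulr //.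
rewrite (lognM p (prime_gt0 pp) d0) logn_prime // eqxx => /(_ isT).
by rewrite add1n ltnS leqn0 eqn0Ngt logn_gt0 mem_primes pp d0 pd.
Qed.

Lemma filter_dvd_divisors D e : (0 < D)%N -> (0 < e)%N -> (e %| D)%N ->
  perm_eq [seq d <- divisors D | (e %| d)%N] [seq (e * k)%N | k <- divisors (D %/ e)].
Proof.
move=> D0 e0 eD; have De0 : (0 < D %/ e)%N by rewrite divn_gt0 // dvdn_leq.
apply: uniq_perm; first by rewrite filter_uniq ?divisors_uniq.
  rewrite map_inj_in_uniq ?divisors_uniq // => x y _ _ /eqP.
  by rewrite eqn_pmul2l // => /eqP.
move=> x; rewrite mem_filter -dvdn_divisors //; apply/andP/mapP.
  move=> [/dvdnP[k ->] kD]; exists k; last by rewrite mulnC.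
  by rewrite -dvdn_divisors // -(dvdn_pmul2r e0) divnK.
move=> [k]; rewrite -dvdn_divisors // => kD ->; split; first exact: dvdn_mulr.
by rewrite -(divnK eD) mulnC dvdn_pmul2r.
Qed.

Lemma nonp_divisors n p : (0 < n)%N -> prime p -> (p %| n)%N ->
  perm_eq [seq d <- divisors n | ~~ (p %| d)%N] [seq d <- divisors (n %/ p) | ~~ (p %| d)%N].
Proof.
move=> n0 pp pn; have np0 : (0 < n %/ p)%N by rewrite divn_gt0 ?prime_gt0 // dvdn_leq.
apply: uniq_perm; rewrite ?filter_uniq ?divisors_uniq //.
move=> x; rewrite !mem_filter -!dvdn_divisors //.
case: (boolP (p %| x)%N) => //= npx; apply/idP/idP.
  by rewrite -{1}(divnK pn) Gauss_dvdl // coprime_sym prime_coprime.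
by move=> h; apply: dvdn_trans h (dvdn_div pn).
Qed.

Lemma moebius_sum n : (0 < n)%N -> \sum_(d <- divisors n) moebius d = (n == 1%N)%:R.
Proof.
move=> n0; case: (ltngtP n 1) => [|n1|->]; first by rewrite ltnS leqn0 (gtn_eqF n0).
  set p := pdiv n; have pp : prime p by exact: pdiv_prime.
  have pn : (p %| n)%N by exact: pdiv_dvd.
  have np0 : (0 < n %/ p)%N by rewrite divn_gt0 ?prime_gt0 // dvdn_leq.
  rewrite (bigID (fun d => p %| d)%N) /=.
  rewrite -(big_filter _ (fun d => p %| d)%N) -(big_filter _ (fun d => ~~ (p %| d))%N).
  rewrite (perm_big _ (filter_dvd_divisors n0 (prime_gt0 pp) pn)) big_map.
  rewrite (perm_big _ (nonp_divisors n0 pp pn)) big_filter.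
  rewrite (bigID (fun d => p %| d)%N) /= big1_seq ?add0r; last first.
    by move=> k /andP[pk]; rewrite -dvdn_divisors // => /(dvdn_gt0 np0) k0; rewrite moebius_pM0.
  rewrite -big_split /= big1_seq // => k /andP[npk].
  rewrite -dvdn_divisors // => /(dvdn_gt0 np0) k0; by rewrite moebius_pM // addNr.
by rewrite /divisors /= big_cons big_nil addr0.
Qed.

Section Ram.
Variable R : realType.
Local Notation C := R[i].

Lemma divisors_gcd_perm D d N : (0 < D)%N -> (d %| D)%N -> (0 < d)%N ->
  perm_eq (divisors (gcdn d N)) [seq x <- divisors D | (x %| d)%N && (x %| N)%N].
Proof.
move=> D0 dD d0; have g0 : (0 < gcdn d N)%N by rewrite gcdn_gt0 d0.
apply: uniq_perm; rewrite ?filter_uniq ?divisors_uniq //.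
move=> x; rewrite mem_filter -!dvdn_divisors // dvdn_gcd.
by case: (boolP (x %| d)%N) => //= xd; rewrite (dvdn_trans xd dD) andbT.
Qed.

Lemma ram_sum D N : (0 < D)%N ->
  \sum_(d <- divisors D) ramanujan R d N = ((D * (D %| N))%N)%:R.
Proof.
move=> D0.
have -> : \sum_(d <- divisors D) ramanujan R d N =
   \sum_(d <- divisors D) \sum_(x <- divisors D)
      (if (x %| d)%N && (x %| N)%N then (moebius (d %/ x))%:~R * x%:R else 0 : C).
  rewrite big_seq_cond [RHS]big_seq_cond; apply: eq_bigr => d /andP[]; rewrite -dvdn_divisors // => dD _.
  rewrite /ramanujan (perm_big _ (divisors_gcd_perm N D0 dD (dvdn_gt0 D0 dD))) big_filter.
  by rewrite big_mkcond.
rewrite exchange_big /=.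
have -> : \sum_(x <- divisors D) \sum_(d <- divisors D)
      (if (x %| d)%N && (x %| N)%N then (moebius (d %/ x))%:~R * x%:R else 0 : C) =
   \sum_(x <- divisors D) (if (x %| N)%N then (((D %/ x)%N == 1%N)%:R * x%:R) else 0 : C).
  rewrite big_seq_cond [RHS]big_seq_cond; apply: eq_bigr => x /andP[]; rewrite -dvdn_divisors // => xD _.
  have x0 : (0 < x)%N := dvdn_gt0 D0 xD.
  case: (boolP (x %| N)%N) => xN; last by rewrite big1 // => d _; rewrite andbF.
  under eq_bigr do rewrite andbT.
  rewrite -big_mkcond /= -big_filter (perm_big _ (filter_dvd_divisors D0 x0 xD)) big_map.
  rewrite -mulr_suml; congr (_ * _).
  under eq_bigr do rewrite mulKn //.
  have h0 : (0 < D %/ x)%N by rewrite divn_gt0 // dvdn_leq.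
  have := congr1 (fun z : int => z%:~R : C) (moebius_sum h0).
  rewrite rmorph_sum /= rmorph_nat => <-.
  by [].
rewrite (bigD1_seq D) ?divisors_id ?divisors_uniq //= big1_seq ?addr0.
  by rewrite divnn D0 /= mul1r; case: (D %| N)%N; rewrite ?muln1 ?muln0.
move=> x /andP[xD]; rewrite -dvdn_divisors // => xdD.
case: (x %| N)%N => //; suff -> : ((D %/ x)%N == 1%N) = false by rewrite mul0r.
apply/negbTE; apply: contra xD => /eqP h; apply/eqP.
by rewrite -(divnK xdD) h mul1n.
Qed.

Lemma sum_divisors_ord n1 (F : nat -> C) : (0 < n1)%N ->
  \sum_(x < n1.+1) (((0 < x) && (x %| n1))%N)%:R * F x = \sum_(x <- divisors n1) F x.
Proof.
move=> n0.
have -> : \sum_(x < n1.+1) (((0 < x) && (x %| n1))%N)%:R * F x =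
   \sum_(x < n1.+1 | ((0 < x) && (x %| n1))%N) F x.
  by rewrite [RHS]big_mkcond; apply: eq_bigr => x _; case: ifP; rewrite ?mul1r ?mul0r.
rewrite -(big_mkord (fun x => (0 < x) && (x %| n1))%N) -big_filter.
apply: perm_big; apply: uniq_perm; rewrite ?filter_uniq ?iota_uniq ?divisors_uniq //.
move=> x; rewrite mem_filter mem_iota -dvdn_divisors // add0n.
case: (boolP (x %| n1)%N) => xn; rewrite ?andbF ?andFb //=.
by rewrite (dvdn_gt0 n0 xn) subn0 ltnS (dvdn_leq n0 xn).
Qed.

Lemma filter_codiv n1 e : (0 < n1)%N -> (0 < e)%N -> (e %| n1)%N ->
  perm_eq [seq x <- divisors n1 | (e %| n1 %/ x)%N] (divisors (n1 %/ e)).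
Proof.
move=> n0 e0 /dvdnP[D De]; have D0 : (0 < D)%N by move: n0; rewrite De muln_gt0 => /andP[].
rewrite De mulnK //.
apply: uniq_perm; rewrite ?filter_uniq ?divisors_uniq //.
move=> x; rewrite mem_filter -!dvdn_divisors ?muln_gt0 ?D0 ?e0 //.
apply/andP/idP.
  move=> [/dvdnP[z hz] /dvdnP[k hk]].
  have x0 : (0 < x)%N by move: n0; rewrite De hk muln_gt0 => /andP[].
  rewrite hk mulnK // in hz; apply/dvdnP; exists z.
  apply/eqP; rewrite -(eqn_pmul2r e0) hk hz; by rewrite mulnAC.
move=> /dvdnP[k hD]; have x0 : (0 < x)%N by move: D0; rewrite hD muln_gt0 => /andP[].
by rewrite hD mulnAC mulnK // !dvdn_mull.
Qed.

Lemma I2 n1 e N : (0 < n1)%N -> (0 < e)%N -> (e %| n1)%N ->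
  \sum_(x < n1.+1) (((0 < x) && (x %| n1))%N)%:R * (((e %| n1 %/ x)%N)%:R * ramanujan R x N)
   = ((n1 %/ e) * ((n1 %/ e) %| N))%:R.
Proof.
move=> n0 e0 en; rewrite (@sum_divisors_ord n1 (fun x => ((e %| n1 %/ x)%N)%:R * ramanujan R x N) n0).
have -> : \sum_(x <- divisors n1) ((e %| n1 %/ x)%N)%:R * ramanujan R x N =
    \sum_(x <- divisors n1 | (e %| n1 %/ x)%N) ramanujan R x N.
  by rewrite [RHS]big_mkcond; apply: eq_bigr => x _; case: ifP; rewrite ?mul1r ?mul0r.
rewrite -big_filter (perm_big _ (filter_codiv n0 e0 en)) ram_sum //.
by rewrite divn_gt0 // dvdn_leq.
Qed.
End Ram.


Lemma nth_mktup m (F : 'I_m -> nat) x0 k (h : (k < m)%N) :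
  nth x0 (mktuple F) k = F (Ordinal h).
Proof. by rewrite -(nth_mktuple F x0 (Ordinal h)). Qed.

Lemma nth_mktup_big m (F : 'I_m -> nat) x0 k : (m <= k)%N ->
  nth x0 (mktuple F) k = x0.
Proof. by move=> h; rewrite nth_default // size_tuple. Qed.

Lemma chain_trans (a : nat -> nat) M : (forall k, (k < M)%N -> (a k.+1 %| a k)%N) ->
  forall i k, (i <= k)%N -> (k <= M)%N -> (a k %| a i)%N.
Proof.
move=> H i k; elim: k => [|k IH]; first by rewrite leqn0 => /eqP ->.
rewrite leq_eqVlt => /orP[/eqP -> //|]; rewrite ltnS => ik kM.
exact: dvdn_trans (H k kM) (IH ik (ltnW kM)).
Qed.

Section Main.
Variable R : realType.
Local Notation C := R[i].

Lemma prod_forall m (b : 'I_m -> bool) :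
  \prod_(j < m) ((b j)%:R : C) = ([forall j, b j])%:R.
Proof.
case: (boolP [forall j, b j]) => [/forallP H|/forallPn[j /negbTE bj]].
  by rewrite big1 // => j _; rewrite H.
by rewrite (bigD1 j) //= bj mul0r.
Qed.

Definition Sterm m (gam : 'I_m -> nat) (eta : m.-tuple nat -> C) (g : nat -> nat -> C)
   (n0 : nat) (d : {ffun 'I_m -> 'I_n0.+1}) : C :=
  let P := mktuple (fun j => (nat_of_ord (d j)) ^ gam j)%N in
  eta P * \prod_(i < m.+1) fq (g i) (nth 1%N (n0 :: P) i) (nth 1%N (n0 :: P) i.+1).

Lemma SsumE m (gam : 'I_m -> nat) eta g n :
  Ssum gam eta g n = \sum_(d : {ffun 'I_m -> 'I_(n 0%N).+1} |
         [forall j : 'I_m, (0 < d j)%N &&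
            (d j ^ gam j %| \big[gcdn/0%N]_(0 <= i < j.+2) n i)%N]) Sterm gam eta g d.
Proof. by []. Qed.

Lemma Sterm_chain m (gam : 'I_m -> nat) eta g n0 d :
  Sterm gam eta g (n0:=n0) d != 0 ->
  let a := nth 1%N (n0 :: mktuple (fun j => (nat_of_ord (d j)) ^ gam j)%N) in
  forall k, (k < m.+1)%N -> (a k.+1 %| a k)%N.
Proof.
rewrite /Sterm /= mulf_eq0 negb_or => /andP[_ /prodf_neq0 H] k km.
have := H (Ordinal km) isT; rewrite /fq /=.
by case: ifP => //; rewrite eqxx.
Qed.

Lemma chain_sum m (gam : 'I_m -> nat) eta g n : (0 < n 0%N)%N ->
  Ssum gam eta g n = \sum_(d : {ffun 'I_m -> 'I_(n 0%N).+1})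
     Sterm gam eta g d * \prod_(j < m)
       ((0 < d j)%N && (d j ^ gam j %| n 0%N)%N && (d j ^ gam j %| n j.+1)%N)%:R.
Proof.
move=> n0; rewrite SsumE big_mkcond /=; apply: eq_bigr => d _.
rewrite prod_forall.
case: (eqVneq (Sterm gam eta g d) 0) => [->|nz]; first by rewrite mul0r; case: ifP.
have ch := Sterm_chain nz; set a := nth _ _ in ch.
have aj : forall j : 'I_m, a j.+1 = (d j ^ gam j)%N.
  by move=> [j hj]; rewrite /a /= (nth_mktup _ _ hj).
suff -> : [forall j : 'I_m, (0 < d j)%N &&
            (d j ^ gam j %| \big[gcdn/0%N]_(0 <= i < j.+2) n i)%N] =
          [forall j, (0 < d j)%N && (d j ^ gam j %| n 0%N)%N && (d j ^ gam j %| n j.+1)%N].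
  by case: forallP; rewrite ?mulr1 ?mulr0.
apply/forallP/forallP => H j.
  have /andP[-> hg] := H j; rewrite /=.
  move: hg; rewrite big_mkord => /dvdn_biggcdP hg.
  by rewrite (hg ord0 isT) (hg ord_max isT).
have /andP[/andP[-> h0] hj] := H j; rewrite /= big_mkord; apply/dvdn_biggcdP.
move=> [[|i] hi] _ //=.
have hi' : (i < m)%N by rewrite (leq_trans _ (ltn_ord j)) // -ltnS.
have h1 : (a j.+1 %| a i.+1)%N.
  apply: (chain_trans ch); first by rewrite -ltnS.
  by rewrite ltnS ltnW.
have /andP[_ h2] := H (Ordinal hi').
by rewrite -aj (dvdn_trans h1) // (aj (Ordinal hi')).
Qed.


Lemma ext_rev m (L : 'I_m -> nat) (j : 'I_m) : ext L (m - j.+1) = L (rev_ord j).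
Proof.
have h : (m - j.+1 < m)%N by rewrite subnSK // ?ltn_ord // leq_subr.
rewrite /ext insubT /=; congr L; exact: val_inj.
Qed.

Lemma prod_rev m (F : 'I_m -> C) : \prod_(j < m) F j = \prod_(j < m) F (rev_ord j).
Proof. by rewrite (reindex_inj rev_ord_inj). Qed.

Lemma natr_and (a b : bool) : ((a && b)%N%:R : C) = a%:R * b%:R.
Proof. by case: a; case: b; rewrite ?mul1r ?mul0r. Qed.

Variables (m : nat) (gam : 'I_m -> nat) (f : nat -> nat -> C) (xi : m.-tuple nat -> C).

Definition G n1 (e : {ffun 'I_m -> 'I_n1.+1}) : C :=
  Sterm (fun _ => 1%N) (txi gam xi n1) (ftil m f) e.
Definition A n1 (e : {ffun 'I_m -> 'I_n1.+1}) : C :=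
  \prod_(j < m) (((0 < e j) && (e j %| n1))%N)%:R.
Definition K n1 e' N : C := ((n1 %/ e') * ((n1 %/ e') %| N))%N%:R.

Lemma T_expand n1 t : (0 < n1)%N ->
  Ssum (fun _ => 1%N) (txi gam xi n1) (ftil m f) (revargs m n1 t) =
  \sum_(e : {ffun 'I_m -> 'I_n1.+1}) G e * A e *
      \prod_(j < m) ((e (rev_ord j) %| t (m - (rev_ord j).+1))%N)%:R.
Proof.
move=> n0; rewrite chain_sum; last by [].
apply: eq_bigr => e _; rewrite /G /A -mulrA; congr (_ * _).
rewrite -(prod_rev (fun j => ((e j %| t (m - j.+1))%N)%:R)) -big_split /=; apply: eq_bigr => j _.
by rewrite !expn1 !natr_and.
Qed.

Lemma RHS1 n1 (n : nat -> nat) : (0 < n1)%N ->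
  \sum_(l : {ffun 'I_m -> 'I_n1}) acoef gam f xi n1 (fun j => (l j).+1)
        * \prod_(j < m) ee R n1 (n j.+1 * (l j).+1)
  = n1%:R ^- m * \sum_(e : {ffun 'I_m -> 'I_n1.+1}) G e * A e *
        \prod_(j < m) K n1 (e (rev_ord j)) (n j.+1).
Proof.
move=> n0.
have step1 : forall l : {ffun 'I_m -> 'I_n1},
   acoef gam f xi n1 (fun j => (l j).+1) * \prod_(j < m) ee R n1 (n j.+1 * (l j).+1) =
   n1%:R ^- m * \sum_(e : {ffun 'I_m -> 'I_n1.+1}) G e * A e *
     \prod_(j < m) (((e (rev_ord j) %| (l j).+1)%N)%:R * ee R n1 (n j.+1 * (l j).+1)).
  move=> l; rewrite /acoef T_expand // -mulrA mulr_suml; congr (_ * _); apply: eq_bigr => e _.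
  rewrite big_split /= -mulrA; congr (_ * _); congr (_ * _); apply: eq_bigr => j _.
  by rewrite -[(m - j.+1)%N]/(nat_of_ord (rev_ord j)) ext_rev rev_ordK.
under eq_bigr do rewrite step1.
rewrite -mulr_sumr; congr (_ * _); rewrite exchange_big; apply: eq_bigr => e _ /=.
rewrite -mulr_sumr.
rewrite -(bigA_distr_bigA (fun (j : 'I_m) (x : 'I_n1) =>
     ((e (rev_ord j) %| x.+1)%N)%:R * ee R n1 (n j.+1 * x.+1))) /=.
rewrite /A prod_forall; case: (boolP [forall j, _]) => [/forallP H|]; last by rewrite !mulr0 !mul0r.
congr (_ * _); apply: eq_bigr => j _; have /andP[e0 en] := H (rev_ord j).
exact: I1.
Qed.

Lemma if_natr (b : bool) (X : C) : (if b then X else 0) = b%:R * X.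
Proof. by case: b; rewrite ?mul1r ?mul0r. Qed.

Lemma RHS2 n1 (n : nat -> nat) : (0 < n1)%N ->
  \sum_(d : {ffun 'I_m -> 'I_n1.+1} | [forall j, (0 < d j) && (d j %| n1)]%N)
       alphacoef gam f xi n1 (fun j => nat_of_ord (d j))
       * \prod_(j < m) ramanujan R (d j) (n j.+1)
  = n1%:R ^- m * \sum_(e : {ffun 'I_m -> 'I_n1.+1}) G e * A e *
        \prod_(j < m) K n1 (e (rev_ord j)) (n j.+1).
Proof.
move=> n0.
have step1 : forall d : {ffun 'I_m -> 'I_n1.+1},
   (if [forall j, (0 < d j) && (d j %| n1)]%N then
     alphacoef gam f xi n1 (fun j => nat_of_ord (d j)) * \prod_(j < m) ramanujan R (d j) (n j.+1)
    else 0) =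
   n1%:R ^- m * \sum_(e : {ffun 'I_m -> 'I_n1.+1}) G e * A e *
     \prod_(j < m) ((((0 < d j) && (d j %| n1))%N)%:R *
        (((e (rev_ord j) %| n1 %/ d j)%N)%:R * ramanujan R (d j) (n j.+1))).
  move=> d; rewrite if_natr -prod_forall /alphacoef T_expand //.
  rewrite mulrCA -!mulrA; congr (_ * _); rewrite mulr_suml; apply: eq_bigr => e _.
  rewrite !big_split /=.
  set X := (X in _ * X * (_ * _)).
  have -> : X = \prod_(j < m) ((e (rev_ord j) %| n1 %/ d j)%N)%:R.
    apply: eq_bigr => j _.
    by rewrite -[(m - (rev_ord j).+1)%N]/(nat_of_ord (rev_ord (rev_ord j))) ext_rev rev_ordK.
  ring.
rewrite big_mkcond /=.
under eq_bigr do rewrite step1.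
rewrite -mulr_sumr; congr (_ * _); rewrite exchange_big; apply: eq_bigr => e _ /=.
rewrite -mulr_sumr.
rewrite -(bigA_distr_bigA (fun (j : 'I_m) (x : 'I_n1.+1) =>
     (((0 < x) && (x %| n1))%N)%:R *
        (((e (rev_ord j) %| n1 %/ x)%N)%:R * ramanujan R x (n j.+1)))) /=.
rewrite /A prod_forall; case: (boolP [forall j, _]) => [/forallP H|]; last by rewrite !mulr0 !mul0r.
congr (_ * _); apply: eq_bigr => j _; have /andP[e0 en] := H (rev_ord j).
exact: I2.
Qed.
End Main.


Lemma codiv N A B : (A %| N)%N -> (B %| N)%N -> (0 < A)%N -> (0 < B)%N ->
  (0 < N)%N ->
  ((N %/ A %| N %/ B)%N = (B %| A)%N) /\ ((B %| A)%N -> ((N %/ B) %/ (N %/ A) = A %/ B)%N).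
Proof.
move=> /dvdnP[a ha] /dvdnP[b hb] A0 B0 N0.
have a0 : (0 < a)%N by move: N0; rewrite ha muln_gt0 => /andP[].
have ea : (N %/ A = a)%N by rewrite ha mulnK.
have eb : (N %/ B = b)%N by rewrite hb mulnK.
rewrite ea eb; split.
  apply/idP/idP.
    move=> /dvdnP[c hc]; apply/dvdnP; exists c; apply/eqP.
    rewrite -(eqn_pmul2l a0); apply/eqP; nia.
  move=> /dvdnP[c hc]; apply/dvdnP; exists c; apply/eqP.
  rewrite -(eqn_pmul2r B0); apply/eqP; nia.
move=> /dvdnP[c hc]; rewrite hc mulnK //.
have -> : b = (c * a)%N.
  apply/eqP; rewrite -(eqn_pmul2r B0); apply/eqP; nia.
by rewrite mulnK.
Qed.

Section Tele.
Variable R : realType.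
Local Notation C := R[i].

Lemma tele_field m (b : nat -> C) : (forall k, (k <= m)%N -> b k != 0) -> b m.+1 = 1 ->
  \prod_(k < m.+1) (b k / b k.+1) ^+ (m - k) * \prod_(j < m) b j.+1 = b 0%N ^+ m.
Proof.
elim: m b => [|m IH] b bn0 bm.
  by rewrite big_ord1 subnn expr0 big_ord0 mulr1 expr0.
rewrite big_ord_recl [X in _ * X]big_ord_recl /=.
have := IH (fun k => b k.+1) (fun k km => bn0 k.+1 km) bm => /= e.
set X := (X in _ * X * _); set Y := (Y in _ * (_ * Y)).
have -> : X = \prod_(k < m.+1) (b k.+1 / b k.+2) ^+ (m - k).
  by apply: eq_bigr => k _; rewrite /= subSS.
have -> : Y = \prod_(j < m) b j.+2 by [].
transitivity ((b 0%N / b 1%N) ^+ (m.+1 - 0) * b 1%N *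
   (\prod_(k < m.+1) (b k.+1 / b k.+2) ^+ (m - k) * \prod_(j < m) b j.+2)); first by ring.
by rewrite e subn0 -mulrA -exprS -exprMn divfK // bn0.
Qed.

Lemma fq_factor m (g : nat -> nat -> C) N A B i : (0 < N)%N -> (0 < A)%N -> (0 < B)%N ->
  (A %| N)%N -> (B %| N)%N ->
  fq (ftil m g i) (N %/ B) (N %/ A) = (A%:R / B%:R) ^+ i * fq (g (m - i)%N) A B.
Proof.
move=> N0 A0 B0 AN BN; have [e1 e2] := codiv AN BN A0 B0 N0.
rewrite /fq e1; case: (boolP (B %| A)%N) => BA; last by rewrite mulr0.
by rewrite (e2 BA) /ftil natr_div // unitfE pnatr_eq0 -lt0n.
Qed.

Lemma prod_rev' m (F : 'I_m -> C) : \prod_(j < m) F j = \prod_(j < m) F (rev_ord j).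
Proof. by rewrite (reindex_inj rev_ord_inj). Qed.

Lemma telescope_fq m (g : nat -> nat -> C) N (a a' : nat -> nat) : (0 < N)%N ->
  (forall k, (k <= m.+1)%N -> (0 < a k)%N) -> (forall k, (k <= m.+1)%N -> (a k %| N)%N) ->
  a m.+1 = 1%N -> a 0%N = N ->
  (forall i, (i <= m.+1)%N -> a' i = (N %/ a (m.+1 - i))%N) ->
  \prod_(i < m.+1) fq (ftil m g i) (a' i) (a' i.+1) * \prod_(j < m) (a j.+1)%:R
  = N%:R ^+ m * \prod_(i < m.+1) fq (g i) (a i) (a i.+1).
Proof.
move=> N0 apos adiv am a0 ha'.
pose F := fun k : nat => (((a k)%:R / (a k.+1)%:R) ^+ (m - k) * fq (g k) (a k) (a k.+1) : C).
have step : \prod_(i < m.+1) fq (ftil m g i) (a' i) (a' i.+1) =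
     \prod_(i < m.+1) F (rev_ord i).
  apply: eq_bigr => i _; have im : (i <= m)%N by rewrite -ltnS.
  rewrite ha' 1?ltnW // ha' // /F /= subSS.
  have e1 : (m.+1 - i = (m - i).+1)%N by rewrite subSn.
  have e2 : (m - (m - i) = i)%N by rewrite subKn.
  rewrite e1 e2 fq_factor //.
  - by apply: apos; lia.
  - by apply: apos; lia.
  - by apply: adiv; lia.
  - by apply: adiv; lia.
rewrite step -(prod_rev' (fun i : 'I_m.+1 => F i)) /F big_split /= mulrAC.
rewrite (@tele_field m (fun k => (a k)%:R)) ?a0 //= ?am //.
by move=> k km; rewrite pnatr_eq0 -lt0n apos // ltnW.
Qed.
End Tele.


Definition nroot (g x : nat) : nat :=
  if [pick r : 'I_x.+1 | (0 < r)%N && (r ^ g == x)%N] is Some r then nat_of_ord r else 0%N.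

Lemma root_le g x : (nroot g x <= x)%N.
Proof. by rewrite /nroot; case: pickP => // r _; rewrite -ltnS ltn_ord. Qed.

Lemma rootP g x : apow g x -> (0 < nroot g x)%N /\ (nroot g x ^ g = x)%N.
Proof.
rewrite /apow /nroot => /andP[x0 /existsP[r hr]]; case: pickP => [s /andP[s0 /eqP sx] //|].
by move=> /(_ r); rewrite hr.
Qed.

Lemma apow_pow g r : (0 < g)%N -> (0 < r)%N -> apow g (r ^ g).
Proof.
move=> g0 r0; rewrite /apow expn_gt0 r0 /=; apply/existsP.
have rl : (r < (r ^ g).+1)%N.
  by rewrite ltnS -{1}(expn1 r) leq_pexp2l.
by exists (Ordinal rl); rewrite /= r0 eqxx.
Qed.

Lemma root_pow g r : (0 < g)%N -> (0 < r)%N -> nroot g (r ^ g) = r.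
Proof.
move=> g0 r0; have [_ h] := rootP (apow_pow g0 r0).
by apply/eqP; rewrite -(eqn_exp2r _ _ g0) h.
Qed.

Lemma divn_div_self N x : (0 < N)%N -> (x %| N)%N -> (0 < x)%N -> (N %/ (N %/ x))%N = x.
Proof.
move=> N0 /dvdnP[k hk] x0; rewrite hk in N0 *.
have k0 : (0 < k)%N by move: N0; rewrite muln_gt0 => /andP[].
by rewrite mulnK // mulKn.
Qed.

Section Fin.
Variable R : realType.
Local Notation C := R[i].
Variables (m : nat) (gam : 'I_m -> nat) (f : nat -> nat -> C) (xi : m.-tuple nat -> C).

Definition hmap n1 (d : {ffun 'I_m -> 'I_n1.+1}) : {ffun 'I_m -> 'I_n1.+1} :=
  [ffun j => inord (n1 %/ (d (rev_ord j)) ^ gam (rev_ord j))].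
Definition hinv n1 (e : {ffun 'I_m -> 'I_n1.+1}) : {ffun 'I_m -> 'I_n1.+1} :=
  [ffun j => inord (nroot (gam j) (n1 %/ e (rev_ord j)))].

Lemma hmapE n1 d j : (@hmap n1 d j : nat) = (n1 %/ (d (rev_ord j)) ^ gam (rev_ord j))%N.
Proof. by rewrite ffunE inordK // ltnS leq_div. Qed.

Lemma hinvE n1 e j : (@hinv n1 e j : nat) = nroot (gam j) (n1 %/ e (rev_ord j)).
Proof. by rewrite ffunE inordK // ltnS (leq_trans (root_le _ _)) // leq_div. Qed.

Lemma term_eq n1 (d : {ffun 'I_m -> 'I_n1.+1}) : (0 < n1)%N -> (forall j, 0 < gam j)%N ->
  (forall j, (0 < d j)%N /\ (d j ^ gam j %| n1)%N) ->
  G gam f xi (hmap d) * \prod_(j < m) ((d j ^ gam j)%N)%:R = n1%:R ^+ m * Sterm gam xi f d.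
Proof.
move=> n0 g0 hd.
have Pn j : (n1 %/ (n1 %/ d j ^ gam j) = d j ^ gam j)%N.
  by have [d0 dn] := hd j; rewrite divn_div_self // expn_gt0 d0.
rewrite /G /Sterm.
set Te := mktuple _; set Td := mktuple _.
have -> : txi gam xi n1 Te = xi Td.
  rewrite /txi big1 ?mul1r.
    by congr xi; apply: eq_mktuple => j; rewrite tnth_mktuple expn1 hmapE rev_ordK Pn.
  move=> j _; rewrite tnth_mktuple expn1 hmapE rev_ordK Pn dvdn_div ?(proj2 (hd j)) //=.
  by rewrite apow_pow // (proj1 (hd j)).
rewrite -mulrA [RHS]mulrCA; congr (_ * _).
have -> : \prod_(j < m) ((d j ^ gam j)%N)%:R = \prod_(j < m) (nth 1%N (n1 :: Td) j.+1)%:R :> C.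
  by apply: eq_bigr => -[j hj] _; rewrite /= (nth_mktup _ _ hj).
apply: telescope_fq => //.
- move=> [|k] hk //=; case: (ltnP k m) => km; last by rewrite nth_mktup_big.
  by rewrite (nth_mktup _ _ km) expn_gt0 (proj1 (hd _)).
- move=> [|k] hk //=; case: (ltnP k m) => km; last by rewrite nth_mktup_big.
  by rewrite (nth_mktup _ _ km) (proj2 (hd _)).
- by rewrite /= nth_mktup_big.
- move=> [|i] hi; first by rewrite subn0 /= nth_mktup_big // divn1.
  rewrite subSS /=; case: (ltnP i m) => im.
    have h' : (m - i.+1 < m)%N by rewrite ltn_subrL (leq_ltn_trans _ im).
    have -> : (m - i = (m - i.+1).+1)%N by rewrite subnSK.
    rewrite /= (nth_mktup _ _ im) (nth_mktup _ _ h') expn1 hmapE.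
    by congr (_ %/ (nat_of_ord (d _)) ^ gam _)%N; apply: val_inj.
  have ei : i = m by apply/eqP; rewrite eqn_leq im -ltnS hi.
  by rewrite ei nth_mktup_big // subnn /= divnn n0.
Qed.

Lemma G0 n1 (e : {ffun 'I_m -> 'I_n1.+1}) :
  ~~ [forall j, apow (gam j) (n1 %/ e (rev_ord j))] -> G gam f xi e = 0.
Proof.
move=> /forallPn[j hj]; rewrite /G /Sterm /txi (bigD1 j) //= tnth_mktuple expn1.
by rewrite (negbTE hj) andbF !mul0r.
Qed.

Lemma LHS_final (n : nat -> nat) : (0 < n 0%N)%N -> (forall j, 0 < gam j)%N ->
  Ssum gam xi f n = (n 0%N)%:R ^- m * \sum_(e : {ffun 'I_m -> 'I_(n 0%N).+1})
      G gam f xi e * A R e * \prod_(j < m) K R (n 0%N) (e (rev_ord j)) (n j.+1).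
Proof.
move=> n0 g0; rewrite chain_sum //.
set n1 := n 0%N.
have -> : \sum_(d : {ffun 'I_m -> 'I_n1.+1}) Sterm gam xi f d * \prod_(j < m)
       (((0 < d j)%N && (d j ^ gam j %| n1)%N && (d j ^ gam j %| n j.+1)%N)%:R : C) =
    \sum_(d : {ffun 'I_m -> 'I_n1.+1} | [forall j, (0 < d j)%N && (d j ^ gam j %| n1)%N])
       Sterm gam xi f d * \prod_(j < m) (((d j ^ gam j %| n j.+1)%N)%:R : C).
  rewrite [RHS]big_mkcond; apply: eq_bigr => d _; rewrite if_natr -prod_forall.
  under eq_bigr do rewrite natr_and.
  by rewrite big_split /= mulrCA.
have -> : \sum_(e : {ffun 'I_m -> 'I_n1.+1})
      G gam f xi e * A R e * \prod_(j < m) K R n1 (e (rev_ord j)) (n j.+1) =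
    \sum_(e : {ffun 'I_m -> 'I_n1.+1} | [forall j, (0 < e j)%N && (e j %| n1)%N]
              && [forall j, apow (gam j) (n1 %/ e (rev_ord j))])
      G gam f xi e * \prod_(j < m) K R n1 (e (rev_ord j)) (n j.+1).
  rewrite [RHS]big_mkcond; apply: eq_bigr => e _; rewrite /A prod_forall.
  case: (boolP [forall j, apow (gam j) (n1 %/ e (rev_ord j))]) => ha.
    by rewrite andbT if_natr mulrCA mulrA.
  by rewrite andbF G0 // !mul0r.
rewrite [in RHS](reindex_onto (@hmap n1) (@hinv n1)); last first.
  move=> e /andP[/forallP hq /forallP ha]; apply/ffunP => j; apply: val_inj.
  rewrite /= hmapE hinvE rev_ordK.
  have [r0 rp] := rootP (ha (rev_ord j)); rewrite rev_ordK in rp; rewrite rp.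
  by have /andP[e0 en] := hq j; rewrite divn_div_self.
rewrite mulr_sumr; apply: eq_big => [d | d /forallP hQ].
  apply/idP/idP; last first.
    move=> /andP[/andP[/forallP hq /forallP ha] /eqP hd]; apply/forallP => j.
    rewrite -hd hinvE; have [r0 rp] := rootP (ha j); rewrite r0 rp /= dvdn_div //.
    by have /andP[_ ] := hq (rev_ord j).
  move=> /forallP hQ.
  apply/andP; split; first (apply/andP; split; apply/forallP => j).
  - have /andP[d0 dn] := hQ (rev_ord j).
    rewrite hmapE dvdn_div // andbT divn_gt0 ?expn_gt0 ?d0 // dvdn_leq //.
  - have /andP[d0 dn] := hQ j.
    by rewrite hmapE rev_ordK divn_div_self ?expn_gt0 ?d0 // apow_pow.
  - apply/eqP/ffunP => j; apply: val_inj; have /andP[d0 dn] := hQ j.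
    by rewrite /= hinvE hmapE rev_ordK divn_div_self ?expn_gt0 ?d0 // root_pow.
have hd : forall j, (0 < d j)%N /\ (d j ^ gam j %| n1)%N.
  by move=> j; have /andP[] := hQ j.
have -> : \prod_(j < m) K R n1 (hmap d (rev_ord j)) (n j.+1) =
    \prod_(j < m) ((d j ^ gam j)%N)%:R * \prod_(j < m) (((d j ^ gam j %| n j.+1)%N)%:R : C).
  rewrite -big_split /=; apply: eq_bigr => j _.
  rewrite /K hmapE rev_ordK divn_div_self ?expn_gt0 ?(proj1 (hd j)) ?(proj2 (hd j)) //.
  by rewrite natrM.
rewrite mulrA term_eq // -mulrA mulKf // expf_neq0 // pnatr_eq0 -lt0n //.
Qed.
End Fin.


Unset Implicit Arguments.
Set Strict Implicit.

Theorem theorem2p7 (R : realType) (m : nat) (gam : 'I_m -> nat)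
    (f : nat -> nat -> R[i]) (xi : m.-tuple nat -> R[i]) (n : nat -> nat) :
  (0 < m)%N -> (forall j, 0 < gam j)%N -> (forall k, k <= m -> 0 < n k)%N ->
  Ssum gam xi f n =
    \sum_(l : {ffun 'I_m -> 'I_(n 0%N)})
       acoef gam f xi (n 0%N) (fun j => (l j).+1)
       * \prod_(j < m) ee R (n 0%N) (n j.+1 * (l j).+1)
  /\
  Ssum gam xi f n =
    \sum_(d : {ffun 'I_m -> 'I_(n 0%N).+1} | [forall j, (0 < d j) && (d j %| n 0%N)]%N)
       alphacoef gam f xi (n 0%N) (fun j => nat_of_ord (d j))
       * \prod_(j < m) ramanujan R (d j) (n j.+1).
Proof.
move=> m0 g0 hn; have n0 : (0 < n 0%N)%N by apply: hn.
by split; rewrite LHS_final // ?RHS1 ?RHS2.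
Qed.
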